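(* Let $V$ be a finite-dimensional irreducible $T$-module. Let $r,\delta,t,\delta^*$ be the nonnegative integers with $r+\delta\le d$, $t+\delta^*\le d$ such that for $0\le i\le d$: $e^*_iV\ne0$ if and only if $r\le i\le r+\delta$, and $e_iV\ne0$ if and only if $t\le i\le t+\delta^*$. Then $\delta=\delta^*$, and the sequence $(a;\{e_i\}_{i=t}^{t+\delta};a^*;\{e^*_i\}_{i=r}^{r+\delta})$ acts on $V$ as a tridiagonal system.
   Context: $\mathbb{F}$ is a field, $d\ge0$, and $\{\theta_i\}_{i=0}^d$, $\{\theta^*_i\}_{i=0}^d$ are scalars in $\mathbb{F}$ with $\theta_i\ne\theta_j$, $\theta^*_i\ne\theta^*_j$ for $i\ne j$, such that $\frac{\theta_{i-2}-\theta_{i+1}}{\theta_{i-1}-\theta_i}$ and $\frac{\theta^*_{i-2}-\theta^*_{i+1}}{\theta^*_{i-1}-\theta^*_i}$ are equal and independent of $i$ for $2\le i\le d-1$. $T$ is the associative $\mathbb{F}$-algebra with $1$ generated by $a,e_0,\dots,e_d,a^*,e^*_0,\dots,e^*_d$ with relations $e_ie_j=\delta_{ij}e_i$, $e^*_ie^*_j=\delta_{ij}e^*_i$, $\sum_ie_i=\sum_ie^*_i=1$, $a=\sum_i\theta_ie_i$, $a^*=\sum_i\theta^*_ie^*_i$, and $e^*_ia^ke^*_j=0$, $e_i{a^*}^ke_j=0$ whenever $0\le i,j,k\le d$ and $k<|i-j|$. (The integers $r,\delta,t,\delta^*$ exist by a preceding lemma.) A tridiagonal pair on a finite-dimensional nonzero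 space $V$ is a pair of diagonalizable linear maps $A,A^*$ such that some ordering $V_0,\dots,V_d$ of the eigenspaces of $A$ satisfies $A^*V_i\subseteq V_{i-1}+V_i+V_{i+1}$, some ordering $V^*_0,\dots,V^*_\delta$ of eigenspaces of $A^*$ satisfies $AV^*_i\subseteq V^*_{i-1}+V^*_i+V^*_{i+1}$ (out-of-range terms zero), and no subspace $W\ne0,V$ is invariant under both; such orderings are standard. A tridiagonal system $(A;\{E_i\};A^*;\{E^*_i\})$ consists of a tridiagonal pair together with standard orderings of the primitive idempotents (projections onto eigenspaces along the others) of $A$ and of $A^*$. *)

(* Defs.v *)
From HB Require Import structures.
From mathcomp Require Import all_boot all_order all_algebra.
Set Implicit Arguments. Unset Strict Implicit. Unset Printing Implicit Defensive.
Import Order.TTheory GRing.Theory Num.Theory.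
Local Open Scope ring_scope.

Definition lpow (F : fieldType) (V : vectType F) (f : 'End(V)) (k : nat) : 'End(V) :=
  iter k (fun g => (f \o g)%VF) \1%VF.

(* A T-module structure on a (finite-dimensional) vector space V is given by
   the images of the generators a, e_0..e_d, a*, e*_0..e*_d satisfying the
   defining relations of T (universal property of the presented algebra).
   Composition (f \o g) is the action of the product (image of f g). *)
Definition T_module (F : fieldType) (d : nat) (th ths : nat -> F)
    (V : vectType F) (a : 'End(V)) (e : nat -> 'End(V))
    (as_ : 'End(V)) (es : nat -> 'End(V)) : Prop :=
  [/\ forall i j, (i <= d)%N -> (j <= d)%N ->
        (e i \o e j)%VF = (if i == j then e i else 0),
      forall i j, (i <= d)%N -> (j <= d)%N ->
        (es i \o es j)%VF = (if i == j then es i else 0),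
      \sum_(i < d.+1) e i = \1%VF /\ \sum_(i < d.+1) es i = \1%VF,
      a = \sum_(i < d.+1) th i *: e i /\ as_ = \sum_(i < d.+1) ths i *: es i &
      forall i j k, (i <= d)%N -> (j <= d)%N -> (k <= d)%N ->
        (k < `|(i:int) - (j:int)|)%N ->
        (es i \o lpow a k \o es j)%VF = 0 /\ (e i \o lpow as_ k \o e j)%VF = 0].

Definition T_irreducible (F : fieldType) (d : nat) (V : vectType F)
    (a : 'End(V)) (e : nat -> 'End(V)) (as_ : 'End(V)) (es : nat -> 'End(V)) : Prop :=
  (fullv : {vspace V}) != 0%VS /\
  forall W : {vspace V},
    (a @: W <= W)%VS -> (as_ @: W <= W)%VS ->
    (forall i, (i <= d)%N -> (e i @: W <= W)%VS) ->
    (forall i, (i <= d)%N -> (es i @: W <= W)%VS) ->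
    W = 0%VS \/ W = fullv.

Definition primitive_idempotents (F : fieldType) (V : vectType F)
    (A : 'End(V)) (E : nat -> 'End(V)) (D : nat) : Prop :=
  exists th : nat -> F,
  [/\ forall i j, (i <= D)%N -> (j <= D)%N -> th i = th j -> i = j,
      forall i, (i <= D)%N -> passmx.leigenspace A (th i) != 0%VS,
      (\sum_(i < D.+1) passmx.leigenspace A (th i))%VS = fullv &
      forall i j v, (i <= D)%N -> (j <= D)%N -> v \in passmx.leigenspace A (th j) ->
        E i v = (if i == j then v else 0)].

Definition tridiagonal_system (F : fieldType) (V : vectType F)
    (A : 'End(V)) (E : nat -> 'End(V)) (As : 'End(V)) (Es : nat -> 'End(V))
    (D Ds : nat) : Prop :=
  [/\ (fullv : {vspace V}) != 0%VS,
      primitive_idempotents A E D /\ primitive_idempotents As Es Ds,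
      forall i, (i <= D)%N ->
        (As @: limg (E i) <=
           \sum_(j < D.+1 | (i <= j.+1)%N && (j <= i.+1)%N) limg (E j))%VS,
      forall i, (i <= Ds)%N ->
        (A @: limg (Es i) <=
           \sum_(j < Ds.+1 | (i <= j.+1)%N && (j <= i.+1)%N) limg (Es j))%VS &
      forall W : {vspace V}, (A @: W <= W)%VS -> (As @: W <= W)%VS ->
        W = 0%VS \/ W = fullv].

(* Main.v *)
Require Import Defs.
From HB Require Import structures.
From mathcomp Require Import all_boot all_order all_algebra.
From mathcomp Require Import zify ring.
Set Implicit Arguments. Unset Strict Implicit. Unset Printing Implicit Defensive.
Import Order.TTheory GRing.Theory Num.Theory.
Local Open Scope ring_scope.

Lemma sum_single (G : zmodType) d j (f : nat -> G) : (j <= d)%N ->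
  (forall i, (i <= d)%N -> i != j -> f i = 0) -> \sum_(i < d.+1) f i = f j.
Proof.
move=> hj H; have hj' : (j < d.+1)%N by [].
rewrite (bigD1 (Ordinal hj')) //= big1 ?addr0 // => i /= hi.
by apply: H; [rewrite -ltnS | ].
Qed.

Definition pfam (F : fieldType) (V : vectType F) (d : nat) (e : nat -> 'End(V))
   (th : nat -> F) (a : 'End(V)) : Prop :=
  [/\ forall i j v, (i <= d)%N -> (j <= d)%N -> e i (e j v) = if i == j then e i v else 0,
      forall v, \sum_(i < d.+1) e i v = v,
      forall j v, (j <= d)%N -> a (e j v) = th j *: e j v &
      forall j v, (j <= d)%N -> e j (a v) = th j *: e j v].

Definition tri (F : fieldType) (V : vectType F) (d : nat) (e : nat -> 'End(V))
   (b : 'End(V)) : Prop :=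
  forall i j v, (i <= d)%N -> (j <= d)%N -> ((i.+1 < j)%N || (j.+1 < i)%N) ->
    e i (b (e j v)) = 0.

Lemma pfam_of (F : fieldType) (V : vectType F) (d : nat) (e : nat -> 'End(V))
   (th : nat -> F) (a : 'End(V)) :
  (forall i j, (i <= d)%N -> (j <= d)%N -> (e i \o e j)%VF = (if i == j then e i else 0)) ->
  \sum_(i < d.+1) e i = \1%VF -> a = \sum_(i < d.+1) th i *: e i ->
  pfam d e th a.
Proof.
move=> Horth Hsum Ha.
have orth : forall i j v, (i <= d)%N -> (j <= d)%N -> e i (e j v) = if i == j then e i v else 0.
  move=> i j v hi hj; rewrite -comp_lfunE Horth //; by case: eqP => // _; rewrite zero_lfunE.
split => //.
- by move=> v; rewrite -sum_lfunE Hsum id_lfunE.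
- move=> j v hj; rewrite Ha sum_lfunE (@sum_single _ d j (fun i => (th i *: e i) (e j v)) hj).
    by rewrite scale_lfunE orth // eqxx.
  by move=> i hi hij; rewrite scale_lfunE orth // (negbTE hij) scaler0.
- move=> j v hj; rewrite Ha sum_lfunE linear_sum.
  rewrite (@sum_single _ d j (fun i => e j ((th i *: e i) v)) hj).
    by rewrite scale_lfunE linearZ /= orth // eqxx.
  by move=> i hi hij; rewrite scale_lfunE linearZ /= orth // eq_sym (negbTE hij) scaler0.
Qed.

Lemma tri_of (F : fieldType) (V : vectType F) (d : nat) (e : nat -> 'End(V)) (b : 'End(V)) :
  (forall i j, (i <= d)%N -> (j <= d)%N -> (1 < `|(i:int) - (j:int)|)%N ->
     (e i \o lpow b 1 \o e j)%VF = 0) -> tri d e b.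
Proof.
move=> H i j v hi hj hij.
have H1 : (1 < `|(i:int) - (j:int)|)%N by lia.
have := H i j hi hj H1.
move=> Hc; have := congr1 (fun g : 'End(V) => g v) Hc.
rewrite /= !comp_lfunE /lpow /= id_lfunE zero_lfunE; exact.
Qed.

Lemma pfam_zero (F : fieldType) (V : vectType F) d e th a (w : V) :
  @pfam F V d e th a -> (forall j, (j <= d)%N -> e j w = 0) -> w = 0.
Proof.
case=> _ Hs _ _ H; rewrite -(Hs w) big1 // => j _; apply: H; rewrite -ltnS; exact: ltn_ord.
Qed.

Lemma mem_lker_sum (F : fieldType) (V : vectType F) d e th a (P : pred nat) (x : V) :
  @pfam F V d e th a ->
  (x \in lker (\sum_(j < d.+1 | P j) e j)) <-> (forall j, (j <= d)%N -> P j -> e j x = 0).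
Proof.
move=> [Ho Hs _ _]; rewrite memv_ker sum_lfunE; split.
  move=> /eqP H j hj Pj; move: (congr1 (e j) H); rewrite linear0 linear_sum /=.
  rewrite (bigD1 (Ordinal (hj : (j < d.+1)%N))) //= Ho // eqxx big1 ?addr0 // => i /andP[_ hi].
  rewrite Ho //; last by rewrite -ltnS.
  by case: eqP => // ei; move: hi; rewrite -val_eqE /= ei eqxx.
by move=> H; apply/eqP; rewrite big1 // => j Pj; apply: H => //; rewrite -ltnS.
Qed.

Lemma key (F : fieldType) (V : vectType F) (d : nat) (a b : 'End(V))
  (e f : nat -> 'End(V)) (th ths : nat -> F) (t r : nat) :
  pfam d e th a -> pfam d f ths b -> tri d f a -> tri d e b ->
  (forall j (v : V), (j < t)%N -> e j v = 0) ->
  (forall j (v : V), (j < r)%N -> f j v = 0) ->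
  (r <= d)%N -> (exists v, f r v != 0) ->
  (forall W : {vspace V}, (a @: W <= W)%VS -> (b @: W <= W)%VS -> W = 0%VS \/ W = fullv) ->
  forall k (v : V), exists x, (forall j, (j <= d)%N -> (r + k < j)%N -> f j x = 0) /\
                       (forall j, (j <= d)%N -> (j < t + k.+1)%N -> e j (v - x) = 0).
Proof.
move=> He Hf Hfa Heb He0 Hf0 hr [v0 hv0] Hirr.
have He' := He; have Hf' := Hf.
case: He' => eo es ea ae; case: Hf' => fo fs fb bf.
pose S k := lker (\sum_(j < d.+1 | (r + k < j)%N) f j).
pose T k := lker (\sum_(j < d.+1 | (j < t + k)%N) e j).
pose U k := (S k :&: T k)%VS.
have memU : forall k x, x \in U k <-> (forall j, (j <= d)%N -> (r + k < j)%N -> f j x = 0) /\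
                       (forall j, (j <= d)%N -> (j < t + k)%N -> e j x = 0).
  move=> k x.
  have m1 := mem_lker_sum (fun j => (r + k < j)%N) x Hf.
  have m2 := mem_lker_sum (fun j => (j < t + k)%N) x He.
  rewrite /U memv_cap /S /T; split.
    by move=> /andP[/m1 h1 /m2 h2].
  by move=> [h1 h2]; apply/andP; split; [apply/m1 | apply/m2].
pose W := (\sum_(k < d.+1) U k)%VS.
have UW : forall k x, (k <= d)%N -> x \in U k -> x \in W.
  move=> k x hk hx; apply: (subvP (sumv_sup (Ordinal (hk : (k < d.+1)%N)) _ _)) => //.
have Ha : forall k u, (k <= d)%N -> u \in U k -> a u \in W.
  move=> k u hk /memU [h1 h2].
  have -> : a u = th (t + k) *: u + (a u - th (t + k) *: u) by rewrite addrC subrK.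
  apply: memvD; first by apply: memvZ; apply: UW hk _; apply/memU.
  have hw1 : forall j, (j <= d)%N -> (r + k.+1 < j)%N -> f j (a u - th (t + k) *: u) = 0.
    move=> j hj hjk; rewrite linearB linearZ /= (h1 j hj) ?scaler0 ?subr0; last by lia.
    rewrite -(fs u) !linear_sum big1 //= => m _.
    case: (ltnP (r + k) m) => hm; first by rewrite (h1 m) ?linear0 // -ltnS.
    apply: Hfa => //; [by rewrite -ltnS ltn_ord | apply/orP; right; lia].
  have hw2 : forall j, (j <= d)%N -> (j < t + k.+1)%N -> e j (a u - th (t + k) *: u) = 0.
    move=> j hj hjk; rewrite linearB linearZ /= ae //.
    case: (ltnP j (t + k)) => hj'; first by rewrite h2 // !scaler0 subrr.
    have -> : j = (t + k)%N by lia.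
    by rewrite subrr.
  case: (ltnP k d) => hkd.
    apply: (UW k.+1) => //; apply/memU; split => //.
  rewrite (pfam_zero (w := a u - th (t + k) *: u) He) ?mem0v // => j hj; apply hw2 => //; lia.
have Hb : forall k u, (k <= d)%N -> u \in U k -> b u \in W.
  move=> k u hk /memU [h1 h2].
  have -> : b u = ths (r + k) *: u + (b u - ths (r + k) *: u) by rewrite addrC subrK.
  apply: memvD; first by apply: memvZ; apply: UW hk _; apply/memU.
  have hw1 : forall j, (j <= d)%N -> (r + k <= j)%N -> f j (b u - ths (r + k) *: u) = 0.
    move=> j hj hjk; rewrite linearB linearZ /= bf //.
    case: (ltnP (r + k) j) => hj'; first by rewrite h1 // !scaler0 subrr.
    have -> : j = (r + k)%N by lia.
    by rewrite subrr.
  have hw2 : forall j, (j <= d)%N -> (j.+1 < t + k)%N -> e j (b u - ths (r + k) *: u) = 0.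
    move=> j hj hjk; rewrite linearB linearZ /= (h2 j hj) ?scaler0 ?subr0; last by lia.
    rewrite -(es u) !linear_sum big1 //= => m _.
    case: (ltnP m (t + k)) => hm; first by rewrite (h2 m) ?linear0 // -ltnS.
    apply: Heb => //; [by rewrite -ltnS ltn_ord | apply/orP; left; lia].
  move: hk h1 h2 hw1 hw2; case: k => [|k] hk h1 h2 hw1 hw2.
    rewrite (pfam_zero (w := b u - ths (r + 0) *: u) Hf) ?mem0v // => j hj.
    case: (ltnP j r) => hjr; [by apply: Hf0 | apply: hw1 => //; lia].
  apply: (UW k); first lia.
  by apply/memU; split => j hj hjk; [apply: hw1 | apply: hw2] => //; lia.
have WaW : (a @: W <= W)%VS.
  rewrite /W limg_sum; apply/subv_sumP => k _; apply/subvP => x /memv_imgP [u Hu ->].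
  by apply: (Ha k) => //; rewrite -ltnS; exact: ltn_ord.
have WbW : (b @: W <= W)%VS.
  rewrite /W limg_sum; apply/subv_sumP => k _; apply/subvP => x /memv_imgP [u Hu ->].
  by apply: (Hb k) => //; rewrite -ltnS; exact: ltn_ord.
have hu : f r v0 \in U 0.
  apply/memU; split => j hj hjk.
    by rewrite fo // ifF //; apply/eqP; lia.
  by apply: He0; lia.
have WF : W = fullv.
  case: (Hirr W WaW WbW) => // W0.
  by move: (UW 0%N _ (leq0n d) hu); rewrite W0 memv0 (negbTE hv0).
move=> k v; have : v \in W by rewrite WF memvf.
move=> /memv_sumP [vs Hvs ->].
exists (\sum_(m < d.+1 | (m <= k)%N) vs m); split.
  move=> j hj hjk; rewrite linear_sum big1 // => m hm.
  have /memU [h1 _] := Hvs m isT.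
  by apply: h1 => //; lia.
move=> j hj hjk.
rewrite (bigID (fun m : 'I_d.+1 => (m <= k)%N)) /= addrC addrK linear_sum big1 // => m hm.
have /memU [_ h2] := Hvs m isT.
by apply: h2 => //; lia.
Qed.

Lemma inv_proj (F : fieldType) (V : vectType F) d e th (a : 'End(V)) (W : {vspace V}) :
  pfam d e th a -> (forall i j, (i <= d)%N -> (j <= d)%N -> th i = th j -> i = j) ->
  (a @: W <= W)%VS -> forall i, (i <= d)%N -> (e i @: W <= W)%VS.
Proof.
move=> [eo es ea ae] Hth HW i hi.
pose q (s : seq nat) := foldr (fun j g => ((a - th j *: \1) \o g)%VF) \1%VF s.
have C1 : forall s w, w \in W -> q s w \in W.
  elim=> [|j s IH] w hw /=; first by rewrite id_lfunE.
  rewrite comp_lfunE add_lfunE opp_lfunE scale_lfunE id_lfunE.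
  by apply: memvB; [apply: (subvP HW); apply: memv_img | apply: memvZ]; apply: IH.
have C2 : forall s m v, (m <= d)%N -> q s (e m v) = (\prod_(j <- s) (th m - th j)) *: e m v.
  move=> s m v hm; elim: s => [|j s IH] /=; first by rewrite id_lfunE big_nil scale1r.
  rewrite comp_lfunE add_lfunE opp_lfunE scale_lfunE id_lfunE IH big_cons.
  by rewrite linearZ /= ea // !scalerA -scalerBl; congr (_ *: _); ring.
pose s0 := [seq j <- iota 0 d.+1 | j != i].
apply/subvP => x /memv_imgP [w hw ->].
have Hq : q s0 w = (\prod_(j <- s0) (th i - th j)) *: e i w.
  rewrite -{1}(es w) linear_sum /=.
  rewrite (@sum_single _ d i (fun m => q s0 (e m w)) hi) ?C2 // => m hm hmi.
  rewrite C2 //; apply/eqP; rewrite scaler_eq0; apply/orP; left.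
  rewrite prodf_seq_eq0; apply/hasP; exists m => /=; last by rewrite subrr eqxx.
  by rewrite mem_filter mem_iota hmi /= add0n ltnS hm.
have Hc : \prod_(j <- s0) (th i - th j) != 0.
  rewrite prodf_seq_neq0; apply/allP => j; rewrite mem_filter mem_iota => /andP[hji /andP[_ hj]] /=.
  rewrite subr_eq0; apply/eqP => H; move: hji.
  have hj' : (j <= d)%N by move: hj; rewrite add0n ltnS.
  by rewrite (Hth i j hi hj' H) eqxx.
have -> : e i w = (\prod_(j <- s0) (th i - th j))^-1 *: q s0 w.
  by rewrite Hq scalerA mulVf // scale1r.
by apply: memvZ; apply: C1.
Qed.

Lemma limg_zero (F : fieldType) (V : vectType F) (g : 'End(V)) :
  limg g = 0%VS -> forall v, g v = 0.
Proof. by move=> H v; have := memv_img g (memvf v); rewrite H memv0 => /eqP. Qed.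

Lemma limg_nz (F : fieldType) (V : vectType F) (g : 'End(V)) :
  limg g != 0%VS -> exists v, g v != 0.
Proof.
move=> H; have := memv_pick (limg g); move=> /memv_imgP [u _ hu].
by exists u; rewrite -hu vpick0.
Qed.

Lemma limg_nz' (F : fieldType) (V : vectType F) (g : 'End(V)) v :
  g v != 0 -> limg g != 0%VS.
Proof.
by apply: contra => /eqP H; rewrite (limg_zero H).
Qed.

Lemma sum_window (G : zmodType) d t D (g : nat -> G) : (t + D <= d)%N ->
  (forall m, (m <= d)%N -> ((m < t)%N || (t + D < m)%N) -> g m = 0) ->
  \sum_(m < d.+1) g m = \sum_(i < D.+1) g (t + i)%N.
Proof.
move=> htd H.
rewrite -(big_mkord xpredT g) (@big_cat_nat _ _ _ t) //=; last by lia.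
rewrite big_nat_cond big1 ?add0r; last first.
  by move=> m /andP[/andP[_ hm] _]; apply: H; lia.
rewrite (@big_cat_nat _ _ _ (t + D.+1)) /=; [|lia|lia].
rewrite [X in _ + X]big_nat_cond [X in _ + X]big1 ?addr0; last first.
  by move=> m /andP[/andP[hm1 hm2] _]; apply: H; lia.
rewrite -{1}(add0n t) big_addn (addKn t) big_mkord.
by apply: eq_bigr => i _; rewrite addnC.
Qed.

Lemma eig1 (F : fieldType) (V : vectType F) d e th (a : 'End(V)) j (v : V) :
  pfam d e th a -> (forall i j, (i <= d)%N -> (j <= d)%N -> th i = th j -> i = j) ->
  (j <= d)%N -> v \in passmx.leigenspace a (th j) ->
  forall m, (m <= d)%N -> e m v = if m == j then v else 0.
Proof.
move=> Hp Hth hj; have [eo es ea ae] := Hp.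
rewrite /passmx.leigenspace memv_ker add_lfunE opp_lfunE scale_lfunE id_lfunE subr_eq0 => /eqP Hv.
have Z : forall m, (m <= d)%N -> m != j -> e m v = 0.
  move=> m hm hmj; have := ae m v hm; rewrite Hv linearZ /= => /eqP.
  rewrite -subr_eq0 -scalerBl scaler_eq0 subr_eq0 => /orP[/eqP H|/eqP //].
  by move: hmj; rewrite (Hth j m hj hm H) eqxx.
move=> m hm; case: eqP => [->|/eqP hmj]; last exact: Z.
rewrite -{2}(es v) (@sum_single _ d j (fun k => e k v) hj) //.
Qed.

Lemma eig2 (F : fieldType) (V : vectType F) d e th (a : 'End(V)) j (w : V) :
  pfam d e th a -> (j <= d)%N -> e j w \in passmx.leigenspace a (th j).
Proof.
move=> [eo es ea ae] hj.
by rewrite /passmx.leigenspace memv_ker add_lfunE opp_lfunE scale_lfunE id_lfunE ea // subrr.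
Qed.

Lemma tri_sub (F : fieldType) (V : vectType F) d e th (a b : 'End(V)) t D i :
  pfam d e th a -> tri d e b -> (t + D <= d)%N ->
  (forall m (v : V), (m <= d)%N -> ((m < t)%N || (t + D < m)%N) -> e m v = 0) -> (i <= D)%N ->
  (b @: limg (e (t + i)%N) <=
     \sum_(j < D.+1 | (i <= j.+1)%N && (j <= i.+1)%N) limg (e (t + j)%N))%VS.
Proof.
move=> [eo es ea ae] Htri htd Hz hi.
apply/subvP => x /memv_imgP [y /memv_imgP [z _ ->] ->].
rewrite -(es (b (e (t + i)%N z))).
rewrite (@sum_window _ d t D (fun m => e m (b (e (t + i)%N z))) htd); last first.
  by move=> m hm hmt; apply: Hz.
rewrite (bigID (fun j : 'I_D.+1 => (i <= j.+1)%N && (j <= i.+1)%N)) /= [X in _ + X]big1 ?addr0.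
  by apply: memv_sumr => j _; apply: memv_img; apply: memvf.
move=> j hj; have hjD := ltn_ord j; apply: Htri; lia.
Qed.

Lemma prim (F : fieldType) (V : vectType F) d e th (a : 'End(V)) t D :
  pfam d e th a -> (forall i j, (i <= d)%N -> (j <= d)%N -> th i = th j -> i = j) ->
  (t + D <= d)%N ->
  (forall m (v : V), (m <= d)%N -> ((m < t)%N || (t + D < m)%N) -> e m v = 0) ->
  (forall i, (i <= D)%N -> exists v, e (t + i)%N v != 0) ->
  primitive_idempotents a (fun i => e (t + i)%N) D.
Proof.
move=> Pe Hth htd ez nz; have [eo es ea ae] := Pe.
exists (fun i => th (t + i)%N); split.
- move=> i j hi hj H; have := Hth _ _ _ _ H; lia.
- move=> i hi; have [v hv] := nz i hi; apply/eqP => H0.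
  have hti : (t + i <= d)%N by lia.
  by have := eig2 v Pe hti; rewrite H0 memv0 (negbTE hv).
- apply/eqP; rewrite eqEsubv subvf /=; apply/subvP => v _.
  rewrite -(es v) (@sum_window _ d t D (fun m => e m v) htd); last first.
    by move=> m hm hw; apply: ez.
  apply: memv_sumr => i _; apply: (eig2 v Pe); have := ltn_ord i; lia.
- move=> i j v hi hj Hv; rewrite (eig1 Pe Hth _ Hv); [|lia|lia].
  by rewrite eqn_add2l.
Qed.

Theorem proposition5p4 (F : fieldType) (d : nat) (th ths : nat -> F)
  (Hth : forall i j, (i <= d)%N -> (j <= d)%N -> th i = th j -> i = j)
  (Hths : forall i j, (i <= d)%N -> (j <= d)%N -> ths i = ths j -> i = j)
  (Hbeta : exists beta : F, forall i, (2 <= i)%N -> (i <= d.-1)%N ->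
      (th (i - 2)%N - th i.+1) / (th i.-1 - th i) = beta /\
      (ths (i - 2)%N - ths i.+1) / (ths i.-1 - ths i) = beta)
  (V : vectType F) (a : 'End(V)) (e : nat -> 'End(V))
  (as_ : 'End(V)) (es : nat -> 'End(V))
  (Hmod : T_module d th ths a e as_ es)
  (Hirr : T_irreducible d a e as_ es)
  (r delta t deltas : nat)
  (Hrd : (r + delta <= d)%N) (Htd : (t + deltas <= d)%N)
  (Hes : forall i, (i <= d)%N -> (limg (es i) != 0%VS) = (r <= i <= r + delta)%N)
  (He : forall i, (i <= d)%N -> (limg (e i) != 0%VS) = (t <= i <= t + deltas)%N) :
  delta = deltas /\
  tridiagonal_system a (fun i => e (t + i)%N) as_ (fun i => es (r + i)%N) delta delta.
Proof.
case: Hmod => Ho Hso [Hs Hss] [Ha Has] Hk.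
have Pe : pfam d e th a := pfam_of Ho Hs Ha.
have Pf : pfam d es ths as_ := pfam_of Hso Hss Has.
have Tfa : tri d es a.
  apply: tri_of => i j hi hj h; have hk : (1 <= d)%N by lia.
  by case: (Hk i j 1%N hi hj hk h).
have Teb : tri d e as_.
  apply: tri_of => i j hi hj h; have hk : (1 <= d)%N by lia.
  by case: (Hk i j 1%N hi hj hk h).
have Hirr2 : forall W : {vspace V}, (a @: W <= W)%VS -> (as_ @: W <= W)%VS ->
    W = 0%VS \/ W = fullv.
  move=> W h1 h2; apply: (Hirr.2 W h1 h2); [exact: inv_proj Pe Hth h1 | exact: inv_proj Pf Hths h2].
have ez : forall m (v : V), (m <= d)%N -> ((m < t)%N || (t + deltas < m)%N) -> e m v = 0.
  move=> m v hm hw; apply: limg_zero; apply/eqP; apply: negbNE; rewrite He //; lia.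
have fz : forall m (v : V), (m <= d)%N -> ((m < r)%N || (r + delta < m)%N) -> es m v = 0.
  move=> m v hm hw; apply: limg_zero; apply/eqP; apply: negbNE; rewrite Hes //; lia.
have enz : forall i, (i <= deltas)%N -> exists v, e (t + i)%N v != 0.
  by move=> i hi; apply: limg_nz; rewrite He; lia.
have fnz : forall i, (i <= delta)%N -> exists v, es (r + i)%N v != 0.
  by move=> i hi; apply: limg_nz; rewrite Hes; lia.
have e0 : forall j (v : V), (j < t)%N -> e j v = 0.
  by move=> j v hj; apply: ez; lia.
have f0 : forall j (v : V), (j < r)%N -> es j v = 0.
  by move=> j v hj; apply: fz; lia.
have hdd : delta = deltas.
  case: (ltngtP delta deltas) => // h.
  - have [v hv] := enz deltas (leqnn _).
    have ht : (t <= d)%N by lia.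
    have [w hw] := enz 0%N (leq0n _); rewrite addn0 in hw.
    have [x [hx1 hx2]] := key Pf Pe Teb Tfa f0 e0 ht (ex_intro _ w hw)
        (fun W h1 h2 => Hirr2 W h2 h1) delta v.
    have hvx : v - x = 0.
      apply: (pfam_zero Pf) => j hj; case: (ltnP j (r + delta.+1)) => hj'.
        exact: hx2.
      by apply: fz => //; lia.
    move/eqP: hvx; rewrite subr_eq0 => /eqP hvx.
    by move: hv; rewrite hvx hx1 ?eqxx //; lia.
  - have [v hv] := fnz delta (leqnn _).
    have hr : (r <= d)%N by lia.
    have [w hw] := fnz 0%N (leq0n _); rewrite addn0 in hw.
    have [x [hx1 hx2]] := key Pe Pf Tfa Teb e0 f0 hr (ex_intro _ w hw) Hirr2 deltas v.
    have hvx : v - x = 0.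
      apply: (pfam_zero Pe) => j hj; case: (ltnP j (t + deltas.+1)) => hj'.
        exact: hx2.
      by apply: ez => //; lia.
    move/eqP: hvx; rewrite subr_eq0 => /eqP hvx.
    by move: hv; rewrite hvx hx1 ?eqxx //; lia.
subst deltas; split => //; split.
- exact: Hirr.1.
- split; [exact: prim Pe Hth Htd ez enz | exact: prim Pf Hths Hrd fz fnz].
- by move=> i hi; apply: tri_sub Pe Teb Htd ez hi.
- by move=> i hi; apply: tri_sub Pf Tfa Hrd fz hi.
- exact: Hirr2.
Qed.
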